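(* Let $G$ be an almost hypohamiltonian graph with exceptional vertex $w$, and let $M$ be a $3$-edge-cut in $G$ (a set of three edges whose removal disconnects $G$). Then $G - M$ has exactly two components $A_1$ and $A_2$, with $A_1 \cong K_1$ and $A_2 \not\cong K_1$. In particular, almost hypohamiltonian graphs are cyclically $4$-edge-connected.
   Context: All graphs are finite, undirected, connected, without loops or multiple edges. A graph is hamiltonian if it has a cycle through all its vertices. A non-hamiltonian graph $G$ is almost hypohamiltonian if there exists a vertex $w$ (the exceptional vertex) such that $G - w$ is non-hamiltonian and $G - v$ is hamiltonian for every vertex $v \neq w$. A graph is cyclically $4$-edge-connected if no edge set of size less than $4$ separates it into two components each containing a cycle. *)

(* Defs.v *)
From mathcomp Require Import all_boot.
Set Implicit Arguments. Unset Strict Implicit. Unset Printing Implicit Defensive.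

Section Graphs.
Variable T : finType.

Definition simple_graph (e : rel T) : Prop := symmetric e /\ irreflexive e.
Definition connected_graph (e : rel T) : Prop := forall x y : T, connect e x y.

(* the subgraph induced by S is hamiltonian: a cycle through all vertices of S
   (a cycle has at least 3 vertices) *)
Definition ham_on (e : rel T) (S : {set T}) : Prop :=
  exists s : seq T, [/\ uniq s, forall x, (x \in s) = (x \in S),
                        3 <= size s & cycle e s].

Definition hamiltonian (e : rel T) : Prop := ham_on e [set: T].

Definition ham_minus (e : rel T) (v : T) : Prop := ham_on e [set~ v].

Definition almost_hypohamiltonian (e : rel T) (w : T) : Prop :=
  [/\ ~ hamiltonian e, ~ ham_minus e w & forall v, v != w -> ham_minus e v].

Definition is_edge (e : rel T) (f : {set T}) : Prop :=
  exists x y, e x y /\ f = [set x; y].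

Definition remove_edges (e : rel T) (F : {set {set T}}) : rel T :=
  fun x y => e x y && ([set x; y] \notin F).

Definition edge_set (e : rel T) (F : {set {set T}}) : Prop :=
  forall f, f \in F -> is_edge e f.

Definition edge_cut (e : rel T) (F : {set {set T}}) (k : nat) : Prop :=
  [/\ edge_set e F, #|F| = k & exists x y, ~~ connect (remove_edges e F) x y].

Definition components (e : rel T) : {set {set T}} :=
  [set [set y | connect e x y] | x : T].

Definition has_cycle_in (e : rel T) (C : {set T}) : Prop :=
  exists s : seq T, [/\ uniq s, 3 <= size s, {subset s <= C} & cycle e s].

Definition cyclically_4_edge_connected (e : rel T) : Prop :=
  ~ exists F : {set {set T}}, [/\ edge_set e F, #|F| < 4 &
      exists C1 C2, [/\ C1 \in components (remove_edges e F),
                        C2 \in components (remove_edges e F), C1 != C2,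
                        has_cycle_in (remove_edges e F) C1 &
                        has_cycle_in (remove_edges e F) C2]].

End Graphs.

(* Main.v *)
Require Import Defs.
From mathcomp Require Import all_boot zify.
From Stdlib Require Import Lia.
Set Implicit Arguments. Unset Strict Implicit. Unset Printing Implicit Defensive.

Section Seqs.
Variable T : finType.
Implicit Types (s p q : seq T) (A : {set T}).

Lemma path_all (P : {set T}) (r : rel T) z q :
  (forall a b, r a b -> a \in P -> b \in P) -> z \in P -> path r z q -> all (mem P) q.
Proof.
move=> H; elim: q z => //= c q IH z zP /andP[rzc pq].
have cP := H _ _ rzc zP; by rewrite cP (IH c).
Qed.

Lemma cross_exist s A : uniq s -> (exists2 a, a \in s & a \in A) ->
  (exists2 b, b \in s & b \notin A) -> exists x, [/\ x \in s, x \in A & next s x \notin A].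
Proof.
move=> Us [a as_ aA] [b bs bA].
case: (boolP [exists x, [&& x \in s, x \in A & next s x \notin A]]).
  by case/existsP=> x /and3P[*]; exists x.
rewrite negb_exists => /forallP H.
have cyc : cycle (fun u v => (u \in A) ==> (v \in A)) s.
  apply: cycle_from_next => // x xs; apply/implyP=> xA.
  by have := H x; rewrite xs xA /= negbK.
case: (rot_to as_) => i t Hr.
move: cyc; rewrite -(rot_cycle i) Hr /= => cyc.
have /allP Hall := @path_all A (fun u v => (u \in A) ==> (v \in A)) a (rcons t a)
  (fun u v => @implyP _ _) aA cyc.
have : b \in a :: t by rewrite -Hr mem_rot.
rewrite inE => /orP[/eqP ba|bt]; first by move: bA; rewrite ba aA.
by move: (Hall b); rewrite mem_rcons inE bt orbT => /(_ isT) /= bA'; rewrite bA' in bA.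
Qed.

Lemma next_next_neq s x : uniq s -> 2 < size s -> x \in s -> next s (next s x) != x.
Proof.
move=> Us Hs xs; case: (rot_to xs) => i t Hr.
rewrite -!(next_rot i Us) Hr.
have : uniq (x :: t) by rewrite -Hr rot_uniq.
have : 2 < size (x :: t) by rewrite -Hr size_rot.
case: t {Hr} => [|c1 [|c2 t]] //= _ U.
have xc1 : x != c1 by apply: contraTneq U => ->; rewrite /= !inE eqxx.
have xc2 : x != c2 by apply: contraTneq U => ->; rewrite /= !inE eqxx orbT.
rewrite /next /= eqxx (eq_sym c1 x) (negbTE xc1) eqxx.
by rewrite eq_sym xc2.
Qed.

Lemma edge_inj s x y : uniq s -> 2 < size s -> x \in s -> y \in s ->
  [set x; next s x] = [set y; next s y] -> x = y.
Proof.
move=> Us Hs xs ys E.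
have : x \in [set y; next s y] by rewrite -E set21.
have : y \in [set x; next s x] by rewrite E set21.
rewrite !inE => /orP[/eqP -> //|/eqP yn] /orP[/eqP -> //|/eqP xn].
by have := next_next_neq Us Hs xs; rewrite -yn -xn eqxx.
Qed.


Lemma split_first A t : exists p q, [/\ t = p ++ q, all (fun z => z \notin A) p &
  (if q is c :: _ then c \in A else true)].
Proof.
elim: t => [|c t [p [q [-> Hp Hq]]]]; first by exists [::], [::].
case: (boolP (c \in A)) => cA; first by exists [::], (c :: p ++ q).
by exists (c :: p), q; rewrite /= cA Hp.
Qed.

Lemma path_allX (A : {set T}) (X : T) (r : rel T) z q :
  (forall a b, r a b -> a \in A -> b \notin A -> b = X) ->
  z \in A -> X \notin q -> path r z (rcons q X) -> all (mem A) q.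
Proof.
move=> H; elim: q z => //= d q IH z zA; rewrite inE negb_or => /andP[Xd Xq].
case/andP=> rzd pq.
have dA : d \in A.
  by apply: contraNT Xd => dA; rewrite (H _ _ rzd zA dA) eqxx.
by rewrite dA (IH d).
Qed.

Lemma dec (e : rel T) s A x y : uniq s -> cycle e s -> x \in s -> x \in A ->
  next s x \notin A ->
  (forall z, z \in s -> z \in A -> next s z \notin A -> next s z = next s x) ->
  (forall z, z \in s -> z \notin A -> next s z \in A -> z = y) ->
  exists p, [/\ path e (next s x) p, last (next s x) p = y, uniq (next s x :: p) &
     forall z, (z \in next s x :: p) = (z \in s) && (z \notin A)].
Proof.
move=> Us cyc xs xA XA HX Hy; set X := next s x in XA HX *.
have Xs : X \in s by rewrite mem_next.
case: (rot_to Xs) => i t Hr.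
have Us' : uniq (X :: t) by rewrite -Hr rot_uniq.
have cyc' : cycle e (X :: t) by rewrite -Hr rot_cycle.
have mem' : forall z, (z \in X :: t) = (z \in s) by move=> z; rewrite -Hr mem_rot.
have nxt : forall z, next (X :: t) z = next s z by move=> z; rewrite -Hr next_rot.
have [p [q [Et Hp Hq]]] := split_first A t.
case: q Et Hq => [|c q] Et cA.
  have : x \in X :: t by rewrite mem'.
  rewrite inE Et cats0 => /orP[/eqP xX|xp]; first by move: XA; rewrite -xX xA.
  by move/allP: Hp => /(_ x xp); rewrite xA.
have cycR1 : cycle (fun a b => (a \in A) && (b \notin A) ==> (b == X)) (X :: t).
  apply: cycle_from_next => // z zt; rewrite nxt; apply/implyP => /andP[zA nzA].
  by rewrite (HX z) // -mem'.
have cycR2 : cycle (fun a b => (a \notin A) && (b \in A) ==> (a == y)) (X :: t).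
  apply: cycle_from_next => // z zt; rewrite nxt; apply/implyP => /andP[zA nzA].
  by rewrite (Hy z) // -mem'.
rewrite Et in Us'.
move: cyc' cycR1 cycR2; rewrite /= Et rcons_cat rcons_cons !cat_path /=.
move=> /andP[pe _] /andP[_ /andP[_ pR1]] /andP[_ /andP[R2 _]].
have XnotA : all (fun z => z \notin A) (X :: p) by rewrite /= XA.
have LA : last X p \notin A by move/allP: XnotA; apply; rewrite mem_last.
have Xcq : X \notin c :: q.
  move: Us'; rewrite -cat_cons cat_uniq => /and3P[_ /hasPn H _].
  by apply/negP => /H; rewrite inE eqxx.
have qA : all (mem A) (c :: q).
  rewrite /= cA; apply: (@path_allX A X (fun a b => (a \in A) && (b \notin A) ==> (b == X)) c q) => //.
    by move=> a b /implyP H aA bA; apply/eqP; apply: H; apply/andP.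
  by move: Xcq; rewrite inE negb_or => /andP[].
exists p; split => //.
- by move: R2; rewrite LA cA => /eqP.
- by move: Us'; rewrite -cat_cons cat_uniq => /and3P[].
move=> z; rewrite -mem' Et -cat_cons mem_cat.
case: (boolP (z \in X :: p)) => zp /=.
  by move/allP: XnotA => /(_ z zp) ->.
case: (boolP (z \in c :: q)) => //= zq.
by move/allP: qA => /(_ z zq) /= ->.
Qed.

Lemma pair_eq A a b c d : a \in A -> b \notin A -> c \in A -> d \notin A ->
  [set a; b] = [set c; d] -> a = c /\ b = d.
Proof.
move=> aA bA cA dA E.
have : a \in [set c; d] by rewrite -E set21.
have : b \in [set c; d] by rewrite -E set22.
rewrite !inE => /orP[/eqP bc|/eqP bd] /orP[/eqP ac|/eqP ad].
- by move: bA; rewrite bc cA.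
- by move: bA; rewrite bc cA.
- by [].
- by move: aA; rewrite ad (negbTE dA).
Qed.


Lemma comb (e : rel T) A X y p Y x q :
  path e X p -> last X p = y -> uniq (X :: p) -> (forall z, (z \in X :: p) = (z \notin A)) ->
  path e Y q -> last Y q = x -> uniq (Y :: q) -> (forall z, (z \in Y :: q) = (z \in A)) ->
  e y Y -> e x X -> 1 < #|A| -> hamiltonian e.
Proof.
move=> pp lp up mp pq lq uq mq eyY exX cA.
exists ((X :: p) ++ (Y :: q)); split.
- rewrite cat_uniq up uq andbT; apply/hasPn => z; rewrite mq mp => ->; by [].
- by move=> z; rewrite mem_cat mp mq inE; case: (z \in A).
- rewrite size_cat; have : #|A| <= size (Y :: q).
    rewrite -(card_uniqP uq); apply: subset_leq_card; apply/subsetP => z.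
    by rewrite mq.
  by move=> H; have := leq_trans cA H; rewrite /=; lia.
- rewrite cat_cons /= rcons_cat cat_path lp /= eyY rcons_path pq lq exX andbT /=.
  by rewrite pp.
Qed.

End Seqs.

Section Main.
Variables (T : finType) (e : rel T) (w : T).
Hypotheses (esym : symmetric e) (eirr : irreflexive e) (econn : connected_graph e)
  (hamv : forall v, v != w -> ham_minus e v) (nham : ~ hamiltonian e).

Definition DD (A : {set T}) : {set {set T}} :=
  [set f | [exists x in A, exists y in ~: A, e x y && (f == [set x; y])]].

Lemma DP (A : {set T}) f : reflect (exists x y, [/\ x \in A, y \notin A, e x y & f = [set x; y]]) (f \in DD A).
Proof.
rewrite inE; apply: (iffP existsP).
  move=> [x /andP[xA /existsP[y /andP[yA /andP[exy /eqP ->]]]]].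
  by exists x, y; rewrite inE in yA.
move=> [x [y [xA yA exy ->]]]; exists x; rewrite xA; apply/existsP; exists y.
by rewrite inE yA exy eqxx.
Qed.

Lemma DE (A : {set T}) x y : x \in A -> y \notin A -> e x y -> [set x; y] \in DD A.
Proof. by move=> xA yA exy; apply/DP; exists x, y. Qed.

Lemma DC (A : {set T}) : DD (~: A) = DD A.
Proof.
apply/setP => f; apply/DP/DP => [[x [y [xA yA exy ->]]]|[x [y [xA yA exy ->]]]];
  exists y, x; rewrite setUC esym; split => //; move: xA yA; rewrite !inE ?negbK //.
Qed.

Lemma pick_other (S : {set T}) u : 1 < #|S| -> exists2 z, z \in S & z != u.
Proof.
case/card_gt1P => x [y [xS yS xy]].
case: (eqVneq x u) => [xu|xu]; last by exists x.
by exists y => //; rewrite -xu eq_sym.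
Qed.

Lemma base v (A : {set T}) : v != w -> (exists2 a, a \in A & a != v) -> (exists2 b, b \notin A & b != v) ->
 exists s x y, [/\ uniq s, forall z, (z \in s) = (z != v), 2 < size s & cycle e s] /\
  [/\ x \in s, x \in A, next s x \notin A, y \in s & (y \notin A) && (next s y \in A)].
Proof.
move=> vw [a aA av] [b bA bv]; case: (hamv vw) => s [Us ms Hs cs].
have ms' : forall z, (z \in s) = (z != v) by move=> z; rewrite ms !inE.
have as_ : a \in s by rewrite ms'.
have bs : b \in s by rewrite ms'.
have [x [xs xA nx]] := cross_exist Us (ex_intro2 _ _ a as_ aA) (ex_intro2 _ _ b bs bA).
have bA' : b \in ~: A by rewrite inE.
have aA' : a \notin ~: A by rewrite inE negbK.
have [y [ys yA ny]] := @cross_exist _ s (~: A) Us (ex_intro2 _ _ b bs bA') (ex_intro2 _ _ a as_ aA').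
exists s, x, y; split; split => //.
by rewrite inE in yA; rewrite inE negbK in ny; rewrite yA ny.
Qed.

Lemma gen v (A : {set T}) : v != w -> (exists2 a, a \in A & a != v) -> (exists2 b, b \notin A & b != v) ->
  exists f1 f2, [/\ f1 \in DD A, f2 \in DD A, f1 != f2, v \notin f1 & v \notin f2].
Proof.
move=> vw Ha Hb.
have [s [x [y [[Us ms Hs cs] [xs xA nxA ys /andP[yA nyA]]]]]] := base vw Ha Hb.
exists [set x; next s x], [set y; next s y]; split.
- by apply: DE => //; apply: next_cycle.
- by rewrite setUC; apply: DE => //; rewrite esym; apply: next_cycle.
- apply/negP => /eqP /(edge_inj Us Hs xs ys) xy; by move: yA; rewrite -xy xA.
- by rewrite !inE negb_or !(eq_sym v) -!ms mem_next xs.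
- by rewrite !inE negb_or !(eq_sym v) -!ms mem_next ys.
Qed.

Lemma conn_edge (A : {set T}) a b : a \in A -> b \notin A -> exists x y, [/\ x \in A, y \notin A & e x y].
Proof.
move=> aA bA; case: (connectP (econn a b)) => p pp bl.
case: (boolP [exists x in A, exists y in ~: A, e x y]).
  move=> /existsP[x /andP[xA /existsP[y /andP[yA exy]]]].
  by exists x, y; rewrite inE in yA.
move=> H.
have : all (mem A) p.
  apply: (@path_all _ A e a p) => // u v euv uA.
  apply/negPn/negP => vA; move/negP: H; apply; apply/existsP; exists u; rewrite uA.
  by apply/existsP; exists v; rewrite inE vA euv.
move/allP => Hall; move: bA; rewrite bl.
have : last a p \in a :: p by apply: mem_last.
by rewrite inE => /orP[/eqP ->|/Hall /= ->]; rewrite ?aA.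
Qed.

Lemma T4 : (exists v, v != w) -> 3 < #|T|.
Proof.
move=> [v vw]; case: (hamv vw) => s [Us ms Hs _].
have U : uniq (v :: s) by rewrite /= Us ms !inE eqxx.
by apply: leq_trans (max_card (mem (v :: s))); rewrite (card_uniqP U).
Qed.


Lemma LA (A : {set T}) a b : a \in A -> b \notin A -> e a b -> a != w ->
  (exists2 a', a' \in A & a' != a) -> #|DD A| <= 3 ->
  exists x X y Y p,
   [/\ x \in A, X \notin A, y \notin A, Y \in A & e x X] /\
   [/\ e y Y, DD A \subset [set [set a; b]; [set x; X]; [set y; Y]],
       a \notin [set x; X], a \notin [set y; Y] & [set x; X] != [set y; Y]] /\
   [/\ path e X p, last X p = y, uniq (X :: p) & forall z, (z \in X :: p) = (z \notin A)].
Proof.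
move=> aA bA eab aw Ha HD.
have ba : b != a by apply: contraNneq bA => ->.
have [s [x [y [[Us ms Hs cs] [xs xA nxA ys /andP[yA nyA]]]]]] :=
  base aw Ha (ex_intro2 _ _ b bA ba).
have Ein : forall z, z \in s -> (z \in A) != (next s z \in A) ->
    [set z; next s z] \in DD A /\ a \notin [set z; next s z].
  move=> z zs; have ez := next_cycle cs zs.
  have az : a \notin [set z; next s z].
    by rewrite !inE negb_or !(eq_sym a) -!ms mem_next zs.
  case zA: (z \in A); case nzA: (next s z \in A) => //= _; split => //.
  - by apply: DE; rewrite ?zA ?nzA.
  - by rewrite setUC; apply: DE; rewrite ?zA ?nzA // esym.
set X := next s x in nxA Ein *; set Y := next s y in nyA Ein *.
have [ExD axE] := Ein x xs ltac:(by rewrite xA nxA).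
have [EyD ayE] := Ein y ys ltac:(by rewrite (negbTE yA) nyA).
have Exy : [set x; X] != [set y; Y].
  by apply/negP => /eqP /(edge_inj Us Hs xs ys) xy; move: yA; rewrite -xy xA.
have abx : [set a; b] != [set x; X] by apply: contraNneq axE => <-; rewrite set21.
have aby : [set a; b] != [set y; Y] by apply: contraNneq ayE => <-; rewrite set21.
have S3 : [set [set a; b]; [set x; X]; [set y; Y]] = DD A.
  apply/eqP; rewrite eqEcard; apply/andP; split.
    apply/subsetP => f; rewrite !in_setU !in_set1 => /orP[/orP[/eqP->|/eqP->]|/eqP->] //.
    by apply: DE.
  by rewrite -setUA cardsU1 cards2 Exy !inE negb_or abx aby.
have cross : forall z, z \in s -> (z \in A) != (next s z \in A) -> z = x \/ z = y.
  move=> z zs cz; have [zD az] := Ein z zs cz; move: zD.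
  rewrite -S3 !inE => /orP[/orP[/eqP E|/eqP E]|/eqP E].
  - by move: az; rewrite E set21.
  - by left; apply: (edge_inj Us Hs zs xs E).
  - by right; apply: (edge_inj Us Hs zs ys E).
have HX : forall z, z \in s -> z \in A -> next s z \notin A -> next s z = X.
  move=> z zs zA nzA; case: (cross z zs); first by rewrite zA nzA.
    by move=> ->.
  by move=> zy; move: yA; rewrite -zy zA.
have Hy : forall z, z \in s -> z \notin A -> next s z \in A -> z = y.
  move=> z zs zA nzA; case: (cross z zs); first by rewrite (negbTE zA) nzA.
    by move=> zx; move: zA; rewrite zx xA.
  by [].
have [p [pp lp up mp]] := dec Us cs xs xA nxA HX Hy.
exists x, X, y, Y, p; split; last split.
- by split => //; apply: next_cycle.
- by split => //; [apply: next_cycle | rewrite S3].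
split => // z; rewrite mp ms; case zA: (z \in A) => /=; rewrite ?andbF ?andbT //.
by apply: contraFneq zA => ->.
Qed.

Lemma uniq_last_self (X : T) p : uniq (X :: p) -> last X p = X -> p = [::].
Proof.
case/lastP: p => [//|p z]; rewrite last_rcons => /= /andP[H _] zX.
by move: H; rewrite mem_rcons inE zX eqxx.
Qed.

Lemma rev_cover (A : {set T}) X y p : path e X p -> last X p = y -> uniq (X :: p) ->
  (forall z, (z \in X :: p) = (z \in A)) ->
  exists q, [/\ path e y q, last y q = X, uniq (y :: q) & forall z, (z \in y :: q) = (z \in A)].
Proof.
move=> pp lp up mp.
have E : rev (X :: p) = y :: rev (belast X p).
  by rewrite lastI rev_rcons lp.
exists (rev (belast X p)); split.
- have := pp; rewrite -(rev_path) lp.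
  by apply: sub_path => u v; rewrite /= esym.
- have : last y (rev (belast X p)) = last y (rev (X :: p)).
    by rewrite E.
  by rewrite /= rev_cons last_rcons.
- by rewrite -E rev_uniq.
- by move=> z; rewrite -E mem_rev.
Qed.

Lemma key (A : {set T}) a b : a \in A -> b \notin A -> e a b -> b != w -> w \notin A ->
  1 < #|A| -> 1 < #|~: A| -> #|DD A| <= 3 -> False.
Proof.
move=> aA bA eab bw wA cA cC HD.
have aw : a != w by apply: contraNneq wA => <-.
have [a' a'A a'a] := pick_other a cA.
have [b' b'A b'b] := pick_other b cC.
have [x [X [y [Y [p [[xA XA yA YA exX] [[eyY sub axE ayE Exy] [pp lp up mp]]]]]]]] :=
  LA aA bA eab aw (ex_intro2 _ _ a' a'A a'a) HD.
have bC : b \in ~: A by rewrite inE.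
have aC : a \notin ~: A by rewrite inE negbK.
have HD' : #|DD (~: A)| <= 3 by rewrite DC.
have [x' [X' [y' [Y' [q [[xA' XA' yA' YA' exX'] [[eyY' sub' bxE byE Exy'] [pq lq uq mq]]]]]]]] :=
  LA bC aC ltac:(by rewrite esym) bw (ex_intro2 _ _ b' b'A b'b) HD'.
rewrite DC in sub'.
rewrite !inE ?negbK in xA' XA' yA' YA'.
have mq' : forall z, (z \in X' :: q) = (z \in A) by move=> z; rewrite mq inE negbK.
have h1 : [set x; X] \in [set [set b; a]; [set x'; X']; [set y'; Y']].
  by apply: (subsetP sub'); apply: DE.
have h2 : [set y; Y] \in [set [set b; a]; [set x'; X']; [set y'; Y']].
  have YD : [set Y; y] \in DD A by apply: DE => //; rewrite esym.
  by rewrite setUC; apply: (subsetP sub').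
move: h1 h2; rewrite !inE.
have bax : [set b; a] != [set x; X] by apply: contraNneq axE => <-; rewrite set22.
have bay : [set b; a] != [set y; Y] by apply: contraNneq ayE => <-; rewrite set22.
rewrite !(eq_sym _ [set b; a]) (negbTE bax) (negbTE bay) /=.
move=> /orP[/eqP E1|/eqP E1] /orP[/eqP E2|/eqP E2].
- by move: Exy; rewrite E1 E2 eqxx.
-
  rewrite [[set x'; X']]setUC in E1.
  have [xX' Xx'] := pair_eq xA XA XA' xA' E1.
  rewrite [[set y; Y]]setUC in E2.
  have [Yy' yY'] := pair_eq YA yA yA' YA' E2.
  have [q2 [pq2 lq2 uq2 mq2]] := rev_cover pq lq uq mq'.
  rewrite -Yy' -xX' in pq2 lq2 uq2 mq2.
  by apply: nham; apply: (comb pp lp up mp pq2 lq2 uq2 mq2 eyY exX cA).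
- rewrite [[set y; Y]]setUC [[set x'; X']]setUC in E2.
  have [xy' XY'] := pair_eq xA XA yA' YA' E1.
  have [YX' yx'] := pair_eq YA yA XA' xA' E2.
  rewrite -YX' -xy' in pq lq uq mq'.
  by apply: nham; apply: (comb pp lp up mp pq lq uq mq' eyY exX cA).
- by move: Exy; rewrite E1 E2 eqxx.
Qed.

Lemma ge4 (A : {set T}) : w \notin A -> 1 < #|A| -> 1 < #|~: A| -> 3 < #|DD A|.
Proof.
move=> wA cA cC; rewrite ltnNge; apply/negP => HD.
have [a0 a0A _] := pick_other w cA.
have [b0 b0C _] := pick_other w cC.
rewrite inE in b0C.
have [a1 [b1 [a1A b1A eab]]] := conn_edge a0A b0C.
have a1w : a1 != w by apply: contraNneq wA => <-.
have [a' a'A a'a] := pick_other a1 cA.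
have [x [X [y [Y [p [[xA XA yA YA exX] [[eyY sub axE ayE Exy] [pp lp up mp]]]]]]]] :=
  LA a1A b1A eab a1w (ex_intro2 _ _ a' a'A a'a) HD.
have Xy : X != y.
  apply/negP => /eqP Xy; rewrite -Xy in lp.
  have p0 := uniq_last_self up lp; rewrite p0 in mp.
  have [b' b'C b'X] := pick_other X cC.
  rewrite inE in b'C; have := mp b'; rewrite b'C inE => /eqP b'X'.
  by rewrite b'X' eqxx in b'X.
case: (eqVneq X w) => [Xw|Xw].
  apply: (@key A Y y) => //; first by rewrite esym.
  by rewrite -Xw eq_sym.
exact: (@key A x X).
Qed.

Lemma ge4' (A : {set T}) : 1 < #|A| -> 1 < #|~: A| -> 3 < #|DD A|.
Proof.
move=> cA cC; case: (boolP (w \in A)) => wA; last exact: ge4.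
rewrite -DC; apply: ge4; rewrite ?setCK ?inE ?negbK //.
Qed.

Lemma deg3 (A : {set T}) a b : a \in A -> b \notin A -> #|A| <= 1 -> 2 < #|DD A|.
Proof.
move=> aA bA cA.
have EA : A = [set a].
  by apply/eqP; rewrite eq_sym eqEcard sub1set aA cards1.
have ex : exists v, v != w.
  case: (eqVneq a w) => [aw|aw]; last by exists a.
  by exists b; apply: contraNneq bA => ->; rewrite -aw.
have T4' := T4 ex.
have cC : 2 < #|~: A|.
  by move: (cardsC A) T4'; rewrite EA cards1 => <-.
have cC1 : 1 < #|~: A| by apply: ltnW.
have [v vC vw] := pick_other w cC1.
rewrite inE in vC.
have [b' b'C b'v] := pick_other v cC1.
rewrite inE in b'C.
have av : a != v by apply: contraNneq vC => <-.
have [f1 [f2 [f1D f2D f12 vf1 vf2]]] := gen vw (ex_intro2 _ _ a aA av) (ex_intro2 _ _ b' b'C b'v).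
case/DP: f1D => u1 [y1 [u1A y1A ey1 Ef1]].
case/DP: f2D => u2 [y2 [u2A y2A ey2 Ef2]].
have u1a : u1 = a by apply/eqP; rewrite -in_set1 -EA.
have u2a : u2 = a by apply/eqP; rewrite -in_set1 -EA.
rewrite u1a in Ef1 ey1; rewrite u2a in Ef2 ey2.
have y12 : y1 != y2 by apply: contraNneq f12 => y12; rewrite Ef1 Ef2 y12.
have [y [yA ey yw]] : exists y, [/\ y \notin A, e a y & y != w].
  case: (eqVneq y1 w) => [y1w|y1w]; last by exists y1.
  by exists y2; split => //; rewrite -y1w eq_sym.
have [b'' b''C b''y] := pick_other y cC1.
rewrite inE in b''C.
have ay : a != y by apply: contraNneq yA => <-.
have [g1 [g2 [g1D g2D g12 yg1 yg2]]] := gen yw (ex_intro2 _ _ a aA ay) (ex_intro2 _ _ b'' b''C b''y).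
have ayD : [set a; y] \in DD A by apply: DE.
have sub : [set [set a; y]; g1; g2] \subset DD A.
  by apply/subsetP => f; rewrite !in_setU !in_set1 => /orP[/orP[/eqP->|/eqP->]|/eqP->].
apply: leq_trans (subset_leq_card sub).
have ag1 : [set a; y] != g1 by apply: contraNneq yg1 => <-; rewrite set22.
have ag2 : [set a; y] != g2 by apply: contraNneq yg2 => <-; rewrite set22.
by rewrite -setUA cardsU1 cards2 g12 !inE negb_or ag1 ag2.
Qed.

Lemma ge3 (A : {set T}) a b : a \in A -> b \notin A -> 2 < #|DD A|.
Proof.
move=> aA bA.
case: (leqP #|A| 1) => cA; first exact: (deg3 aA bA).
case: (leqP #|~: A| 1) => cC; last by apply: ltnW; apply: ge4'.
rewrite -DC; apply: (@deg3 _ b a) => //; rewrite inE ?negbK //.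
Qed.

Definition comp (F : {set {set T}}) x := [set y | connect (remove_edges e F) x y].

Lemma rsym F : symmetric (remove_edges e F).
Proof. by move=> x y; rewrite /remove_edges esym setUC. Qed.

Lemma D_comp F x : DD (comp F x) \subset F.
Proof.
apply/subsetP => f /DP [u [v [uC vC euv ->]]]; apply/negPn/negP => Fn.
move/negP: vC; apply; rewrite !inE in uC *.
apply: connect_trans uC (connect1 _); by rewrite /remove_edges euv Fn.
Qed.

Lemma comp_same F x z : z \in comp F x -> comp F z = comp F x.
Proof.
rewrite inE => xz; apply/setP => y; rewrite !inE.
by rewrite (same_connect (sym_connect_sym (rsym F)) xz).
Qed.

Lemma comp_refl F x : x \in comp F x.
Proof. by rewrite inE connect0. Qed.

Lemma comp_disj F x y z : z \in comp F x -> z \in comp F y -> comp F x = comp F y.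
Proof. by move=> /comp_same <- /comp_same <-. Qed.

Lemma comp_D3 (F : {set {set T}}) x y : #|F| <= 3 -> y \notin comp F x -> DD (comp F x) = F.
Proof.
move=> cF yC; apply/eqP; rewrite eqEcard D_comp /=.
by apply: leq_trans cF (ge3 (comp_refl F x) yC).
Qed.

Lemma part1 (M : {set {set T}}) : edge_cut e M 3 ->
     exists A1 A2 : {set T},
       [/\ components (remove_edges e M) = [set A1; A2], A1 != A2,
           #|A1| = 1 & #|A2| != 1].
Proof.
move=> [_ cM [x0 [y0 nc]]].
have cM3 : #|M| <= 3 by rewrite cM.
set C1 := comp M x0; set C2 := comp M y0.
have y0C1 : y0 \notin C1 by rewrite inE.
have x0C2 : x0 \notin C2.
  rewrite inE; apply: contra nc => H.
  by rewrite (sym_connect_sym (rsym M)).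
have D1 : DD C1 = M := comp_D3 cM3 y0C1.
have D2 : DD C2 = M := comp_D3 cM3 x0C2.
have C12 : C1 != C2 by apply: contraNneq y0C1 => ->; apply: comp_refl.
have disj : forall z, z \in C1 -> z \in C2 -> False.
  by move=> z z1 z2; move/eqP: C12; apply; apply: (comp_disj z1 z2).
have cover : forall z, (z \in C1) || (z \in C2).
  move=> z; apply/negPn/negP; rewrite negb_or => /andP[z1 z2].
  have zC : x0 \notin comp M z.
    by apply: contra z1 => H; rewrite /C1 (comp_same H) comp_refl.
  have D3 : DD (comp M z) = M := comp_D3 cM3 zC.
  have [f fM] : exists f, f \in M.
    by apply/set0Pn; rewrite -card_gt0 cM.
  have f1 : f \in DD C1 by rewrite D1.
  have f2 : f \in DD C2 by rewrite D2.
  have f3 : f \in DD (comp M z) by rewrite D3.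
  case/DP: f1 => u1 [v1 [u1C v1C _ E1]]; case/DP: f2 => u2 [v2 [u2C v2C _ E2]].
  case/DP: f3 => u3 [v3 [u3C v3C _ E3]].
  have : u2 \in f by rewrite E2 set21.
  have : u3 \in f by rewrite E3 set21.
  rewrite E1 !inE => /orP[/eqP u31|/eqP u31] /orP[/eqP u21|/eqP u21].
  - rewrite u31 in u3C; by move: z1; rewrite /C1 (comp_disj u1C u3C) comp_refl.
  - rewrite u31 in u3C; by move: z1; rewrite /C1 (comp_disj u1C u3C) comp_refl.
  - by apply: (disj u1); rewrite // -u21.
  - rewrite u31 -u21 in u3C; by move: z2; rewrite /C2 (comp_disj u2C u3C) comp_refl.
have EC2 : C2 = ~: C1.
  apply/setP => z; rewrite in_setC; case: (boolP (z \in C1)) => z1 /=.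
    by apply/negbTE/negP => /(disj _ z1).
  by move: (cover z); rewrite (negbTE z1).
have Hcomp : components (remove_edges e M) = [set C1; C2].
  apply/setP => C; apply/imsetP/set2P.
    move=> [z _ ->]; case/orP: (cover z) => zC.
      by left; apply: (comp_same zC).
    by right; apply: (comp_same zC).
  by case=> ->; [exists x0 | exists y0].
have ex : exists v, v != w.
  case: (eqVneq x0 w) => [xw|xw]; last by exists x0.
  by exists y0; apply: contraNneq y0C1 => ->; rewrite -xw comp_refl.
have T4' := T4 ex.
have sz : #|C1| + #|C2| = #|T| by rewrite EC2 cardsC.
have c1 : 0 < #|C1| by apply/card_gt0P; exists x0; apply: comp_refl.
have c2 : 0 < #|C2| by apply/card_gt0P; exists y0; apply: comp_refl.
case: (leqP #|C1| 1) => h1.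
  exists C1, C2; split => //; first by apply/eqP; rewrite eqn_leq h1 c1.
  apply/eqP => h2; move: T4'; rewrite -sz h2; move: h1 c1; lia.
case: (leqP #|C2| 1) => h2.
  exists C2, C1; split => //; first by rewrite setUC.
  - by rewrite eq_sym.
  - by apply/eqP; rewrite eqn_leq h2 c2.
  - by rewrite neq_ltn h1 orbT.
have := ge4' h1; rewrite -EC2 => /(_ h2); rewrite D1 cM //.
Qed.

Lemma part2 : cyclically_4_edge_connected e.
Proof.
move=> [F [_ cF [C1 [C2 [C1c C2c C12 [s1 [u1 sz1 sub1 _]] [s2 [u2 sz2 sub2 _]]]]]]].
case/imsetP: C1c => x1 _ E1; case/imsetP: C2c => x2 _ E2.
have E1' : C1 = comp F x1 by [].
have E2' : C2 = comp F x2 by [].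
have card3 : forall s (C : {set T}), uniq s -> 3 <= size s -> {subset s <= C} -> 2 < #|C|.
  move=> s C us szs subs; rewrite -(card_uniqP us) in szs.
  by apply: leq_trans szs (subset_leq_card _); apply/subsetP.
have c1 := card3 _ _ u1 sz1 sub1.
have c2 := card3 _ _ u2 sz2 sub2.
have sub : C2 \subset ~: C1.
  apply/subsetP => z z2; rewrite inE; apply/negP => z1.
  rewrite E1' in z1; rewrite E2' in z2.
  by move: C12; rewrite E1' E2' (comp_disj z1 z2) eqxx.
have cC : 1 < #|~: C1| by apply: leq_trans (ltnW c2) (subset_leq_card sub).
have := ge4' (ltnW c1) cC; rewrite E1'.
have := subset_leq_card (D_comp F x1); move: cF; lia.
Qed.
End Main.

Theorem lemma3p4 (T : finType) (e : rel T) (w : T) :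
  simple_graph e -> connected_graph e -> almost_hypohamiltonian e w ->
  (forall M : {set {set T}}, edge_cut e M 3 ->
     exists A1 A2 : {set T},
       [/\ components (remove_edges e M) = [set A1; A2], A1 != A2,
           #|A1| = 1 & #|A2| != 1])
  /\ cyclically_4_edge_connected e.
Proof.
move=> [es ei] ec [nh _ hv]; split.
  by move=> M; apply: (@part1 T e w es ec hv nh).
exact: (@part2 T e w es ec hv nh).
Qed.
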